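(* Let $\mathfrak{F}'$ be the set of maximal elements of $\mathfrak{F}\setminus\{\mathcal{F}_\infty\}$ and $\mathfrak{F}''$ the set of maximal elements of $\mathfrak{F}\setminus(\mathfrak{F}'\cup\{\mathcal{F}_\infty\})$. For a nonempty finite set $E\subseteq\mathbb{N}$, the filter $\mathcal{F}_E$ belongs to $\mathfrak{F}''$ if and only if one of the following holds: (1) there is an odd prime $p$ with $p\in\Pi_E$ and $A_E=\{2,p\}$; (2) there are two distinct odd primes $p,q$ with $A_E=\{2,p,q\}$ and $\Pi_E\subseteq\{2\}$.
   Context: $\mathbb{N}=\{1,2,\dots\}$, $\mathbb{N}_0=\{0\}\cup\mathbb{N}$, $\Pi$ the set of primes, $\Pi_z$ the set of prime divisors of $z$. The Kirch topology $\tau_K$ on $\mathbb{N}$ is generated by the base of all $a+b\mathbb{N}_0=\{a+bn:n\in\mathbb{N}_0\}$ with $a,b\in\mathbb{N}$ coprime and $b$ square-free. Closures $\overline{U}$ are in $\tau_K$; $\tau_x=\{U\in\tau_K:x\in U\}$. For finite $E\subseteq\mathbb{N}$, $\mathcal{F}_E=\{B\subseteq\mathbb{N}:\exists (U_x)_{x\in E}\in\prod_{x\in E}\tau_x\ (\bigcap_{x\in E}\overline{U_x}\subseteq B)\}$ (with $\mathcal{F}_\emptyset=\{\mathbb{N}\}$); $\mathcal{F}_\infty=\{B\subseteq\mathbb{N}:\exists n\in\mathbb{N}\ \exists U_1,\dots,U_n\in\tau_K\setminus\{\emptyset\}\ (\overline{U_1}\cap\dots\cap\overline{U_n}\subseteq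 B)\}$; $\mathfrak{F}=\{\mathcal{F}_E:E\subseteq\mathbb{N}\text{ finite}\}\cup\{\mathcal{F}_\infty\}$, ordered by inclusion. For nonempty finite $E$: $\Pi_E=\bigcap_{z\in E}\Pi_z$ and $A_E=\{p\in\Pi:\exists k\in\mathbb{N}\ (E\subseteq p\mathbb{Z}\cup(k+p\mathbb{Z}))\}$. *)

(* Defs.v *)
From mathcomp Require Import all_boot.
Set Implicit Arguments. Unset Strict Implicit. Unset Printing Implicit Defensive.

(* subsets of nat (only positive elements are meaningful) *)
Definition pset := nat -> Prop.

Definition subN (B : pset) : Prop := forall x, B x -> 0 < x.

Definition squarefree (b : nat) : Prop :=
  forall p, prime p -> ~ (p * p %| b).

Definition arprog (a b : nat) : pset := fun x => exists n, x = a + b * n.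

(* basic open sets of the Kirch topology *)
Definition kbase (a b : nat) : Prop :=
  0 < a /\ 0 < b /\ coprime a b /\ squarefree b.

Definition kopen (U : pset) : Prop :=
  forall x, U x -> exists a b, kbase a b /\ arprog a b x /\
    (forall y, arprog a b y -> U y).

Definition kclosure (U : pset) : pset := fun x =>
  0 < x /\ forall V, kopen V -> V x -> exists y, V y /\ U y.

Definition filt := pset -> Prop.

Definition FE (E : seq nat) : filt := fun B =>
  subN B /\
  exists U : nat -> pset,
    (forall x, x \in E -> kopen (U x) /\ U x x) /\
    (forall y, 0 < y -> (forall x, x \in E -> kclosure (U x) y) -> B y).

Definition Finf : filt := fun B =>
  subN B /\
  exists (n : nat) (U : nat -> pset), 0 < n /\
    (forall i, i < n -> kopen (U i) /\ exists z, U i z) /\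
    (forall y, 0 < y -> (forall i, i < n -> kclosure (U i) y) -> B y).

Definition fle (F G : filt) : Prop := forall B, F B -> G B.
Definition feq (F G : filt) : Prop := fle F G /\ fle G F.
Definition flt (F G : filt) : Prop := fle F G /\ ~ fle G F.

Definition inFrak (G : filt) : Prop :=
  (exists E : seq nat, all (fun x => 0 < x) E /\ feq G (FE E)) \/ feq G Finf.

Definition Frak1 (G : filt) : Prop :=
  inFrak G /\ ~ feq G Finf /\
  forall H, inFrak H -> ~ feq H Finf -> ~ flt G H.

Definition Frak2 (G : filt) : Prop :=
  inFrak G /\ ~ feq G Finf /\ ~ Frak1 G /\
  forall H, inFrak H -> ~ feq H Finf -> ~ Frak1 H -> ~ flt G H.

Definition PiE (E : seq nat) (p : nat) : Prop :=
  prime p /\ forall z, z \in E -> p %| z.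

Definition AE (E : seq nat) (p : nat) : Prop :=
  prime p /\ exists k, 0 < k /\
    forall z, z \in E -> (p %| z) \/ z = k %[mod p].

(* Main.v *)
Require Import Defs.
From mathcomp Require Import all_boot.
From mathcomp Require Import zify.
From Stdlib Require Import Classical ClassicalEpsilon.
Set Implicit Arguments. Unset Strict Implicit. Unset Printing Implicit Defensive.

Lemma sqf_prime p : prime p -> squarefree p.
Proof.
move=> pp q qp H.
have qp' : q %| p by apply: dvdn_trans H; apply: dvdn_mulr.
move: qp'; rewrite dvdn_prime2 // => /eqP Eq; subst q.
have := dvdn_leq (prime_gt0 pp) H; have := prime_gt1 pp; nia.
Qed.

Lemma sqf1 : squarefree 1.
Proof. move=> q qp /dvdn_leq -/(_ isT); have := prime_gt1 qp; nia. Qed.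

Lemma sqf_dvd a b : a %| b -> squarefree b -> squarefree a.
Proof. by move=> ab sb p pp H; apply: (sb p pp); apply: dvdn_trans ab. Qed.

Lemma mod_dvd_add a b n p : p %| b -> a + b * n = a %[mod p].
Proof. by case/dvdnP=> c ->; rewrite addnC mulnAC modnMDl. Qed.

Lemma dvd_modeq p x y : x = y %[mod p] -> (p %| x) = (p %| y).
Proof. by rewrite /dvdn => ->. Qed.

Lemma sqf_mod g x y : squarefree g ->
  (forall p, prime p -> p %| g -> x = y %[mod p]) -> x = y %[mod g].
Proof.
elim: g {-2}g (leqnn g) => [|n IH] g Hg sg H.
  have g0 : g = 0 by lia. subst g. by exfalso; apply: (sg 2 isT); rewrite dvdn0.
have [g1|g1] := leqP g 1.
  have : g = 0 \/ g = 1 by lia. case=> Eg; subst g; last by rewrite !modn1.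
  by exfalso; apply: (sg 2 isT); rewrite dvdn0.
set p := pdiv g. have pp : prime p by apply: pdiv_prime.
have pg : p %| g by apply: pdiv_dvd.
set g' := g %/ p.
have gE : g = p * g' by rewrite /g' mulnC divnK.
have g'pos : 0 < g' by move: g1; rewrite gE; case: (g') => //; rewrite muln0.
have g'lt : g' <= n.
  have := prime_gt1 pp. move: Hg; rewrite gE. nia.
have sg' : squarefree g' by apply: sqf_dvd sg; rewrite gE dvdn_mull.
have cp : coprime p g'.
  rewrite prime_coprime //; apply/negP => Hd; apply: (sg p pp).
  by rewrite gE dvdn_pmul2l ?prime_gt0.
apply/eqP; rewrite gE chinese_remainder //; apply/andP; split; apply/eqP.
  by apply: H.
apply: IH => // q qp qg; apply: H => //; rewrite gE; exact: dvdn_mull.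
Qed.

Lemma kopen_arprog a b : kbase a b -> kopen (arprog a b).
Proof.
move=> [a0 [b0 [cab sb]]] x [n ->]; exists (a + b * n), b; split; [|split].
- split; first lia. split=> //; split=> //.
  by rewrite -coprime_modl (mod_dvd_add a n (dvdnn b)) coprime_modl.
- by exists 0; rewrite muln0 addn0.
- by move=> y [m ->]; exists (n + m); rewrite mulnDr addnA.
Qed.

Lemma arprog_self a b : arprog a b a.
Proof. by exists 0; rewrite muln0 addn0. Qed.

Lemma closure_easy a b y p : kclosure (arprog a b) y -> prime p -> p %| b ->
  ~~ (p %| y) -> y = a %[mod p].
Proof.
move=> [y0 Hc] pp pb py.
have kb : kbase y p.
  split=> //; split; first exact: prime_gt0.
  by split; [rewrite coprime_sym prime_coprime | exact: sqf_prime].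
case: (Hc _ (kopen_arprog kb) (arprog_self y p)) => w [[n En] [m Em]].
by rewrite -(mod_dvd_add y n (dvdnn p)) -En Em mod_dvd_add.
Qed.

Lemma mod_arprog a b w : 0 < b -> a <= w -> w = a %[mod b] -> arprog a b w.
Proof.
move=> b0 aw /eqP; rewrite eqn_mod_dvd // => /dvdnP [k Hk].
by exists k; rewrite mulnC -Hk subnKC.
Qed.

Lemma closure_hard a b y : 0 < b -> squarefree b -> 0 < y ->
  (forall p, prime p -> p %| b -> ~~ (p %| y) -> y = a %[mod p]) ->
  kclosure (arprog a b) y.
Proof.
move=> b0 sb y0 H; split => // V oV Vy.
case: (oV y Vy) => c [d [[c0 [d0 [cd sd]]] [[n0 Ey] sub]]].
have cyd : coprime y d.
  by rewrite -coprime_modl Ey (mod_dvd_add c n0 (dvdnn d)) coprime_modl.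
set g := gcdn b d. set b' := b %/ g.
have gb : g %| b := dvdn_gcdl b d. have gd : g %| d := dvdn_gcdr b d.
have bE : b = g * b' by rewrite /b' mulnC divnK.
have cdb' : coprime d b'.
  apply/negPn/negP => ncop.
  have g1 : 1 < gcdn d b'.
    have : 0 < gcdn d b' by rewrite gcdn_gt0 d0.
    move: ncop; rewrite /coprime; case: (gcdn d b') => [|[|]] //.
  set q := pdiv (gcdn d b').
  have qp : prime q by apply: pdiv_prime.
  have qg : q %| gcdn d b' by apply: pdiv_dvd.
  have qd : q %| d := dvdn_trans qg (dvdn_gcdl d b').
  have qb' : q %| b' := dvdn_trans qg (dvdn_gcdr d b').
  have qb : q %| b by rewrite bE; apply: dvdn_mull.
  have qgg : q %| g by rewrite /g dvdn_gcd qb qd.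
  apply: (sb q qp); rewrite bE; exact: dvdn_mul.
have cgb' : coprime g b' := coprime_dvdl gd cdb'.
have yag : y = a %[mod g].
  apply: sqf_mod; first exact: sqf_dvd gb sb.
  move=> p pp pg; apply: H => //; first exact: dvdn_trans pg gb.
  apply/negP => py.
  have : coprime p d := coprime_dvdl py cyd.
  by rewrite prime_coprime // (dvdn_trans pg gd).
set w0 := chinese d b' y a.
have w0d : w0 = y %[mod d] := chinese_modl cdb' y a.
have w0b' : w0 = a %[mod b'] := chinese_modr cdb' y a.
have w0g : w0 = a %[mod g].
  by rewrite -yag -(modn_dvdm w0 gd) w0d modn_dvdm.
have w0b : w0 = a %[mod b].
  by apply/eqP; rewrite bE chinese_remainder // w0g w0b' !eqxx.
set w := w0 + d * (b * (y + a)).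
have wy : w = y %[mod d] by rewrite /w mod_dvd_add.
have wa : w = a %[mod b].
  by rewrite /w mulnCA mod_dvd_add.
have wge : y + a <= w.
  rewrite /w mulnA; apply: leq_trans (leq_addl w0 _); apply: leq_pmull.
  by rewrite muln_gt0 d0 b0.
exists w; split.
  apply: sub. have := mod_arprog d0 (_ : y <= w) wy.
  move=> /(_ (leq_trans (leq_addr a y) wge)) [k Hk]. by exists (n0 + k); rewrite Hk Ey mulnDr addnA.
by apply: mod_arprog => //; apply: leq_trans (leq_addl y a) wge.
Qed.

Definition T (E : seq nat) p y :=
  p %| y \/ (forall z, z \in E -> ~~ (p %| z) -> y = z %[mod p]).

Lemma T_mod E p y y' : y = y' %[mod p] -> T E p y -> T E p y'.
Proof.
move=> yy [H|H]; [left; by rewrite -(dvd_modeq yy) | right => z zE pz].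
by rewrite -yy (H z zE pz).
Qed.

Lemma T2 E y : T E 2 y.
Proof.
case oy: (odd y); last by left; rewrite dvdn2 oy.
right => z _; rewrite dvdn2 negbK => oz.
by rewrite !modn2 oy oz.
Qed.

Lemma T_dvd E p y : p %| y -> T E p y.
Proof. by left. Qed.

Lemma closure_mono (A B : pset) y : (forall w, A w -> B w) -> kclosure A y -> kclosure B y.
Proof.
move=> AB [y0 H]; split=> // V oV Vy; case: (H V oV Vy) => w [Vw Aw].
by exists w; split=> //; apply: AB.
Qed.

Lemma coprime_arprog a b n : coprime a b -> coprime (a + b * n) b.
Proof. by move=> cab; rewrite -coprime_modl (mod_dvd_add a n (dvdnn b)) coprime_modl. Qed.

Lemma FE_P E B : FE E B ->
  exists P : seq nat, forall y, 0 < y ->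
    (forall p, p \in P -> prime p -> T E p y) -> B y.
Proof.
move=> [sB [U [HU HB]]].
suff [P HP] : exists P : seq nat, forall y, 0 < y ->
    (forall p, p \in P -> prime p -> T E p y) -> forall x, x \in E -> kclosure (U x) y.
  by exists P => y y0 Hy; apply: HB => //; apply: HP.
have : forall L : seq nat, {subset L <= E} -> exists P : seq nat, forall y, 0 < y ->
    (forall p, p \in P -> prime p -> T E p y) -> forall x, x \in L -> kclosure (U x) y.
  elim=> [|x L IH] sub; first by exists [::] => y _ _ x; rewrite in_nil.
  have [P1 HP1] := IH (fun z zL => sub z ltac:(by rewrite inE zL orbT)).
  have xE : x \in E := sub x (mem_head x L).
  case: (HU x xE) => oU Ux; case: (oU x Ux) => a [b [[a0 [b0 [cab sb]]] [[n Ex] subU]]].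
  exists (primes b ++ P1) => y y0 HT z; rewrite inE => /orP [/eqP -> | zL]; last first.
    by apply: HP1 => // p pP; apply: HT; rewrite mem_cat pP orbT.
  apply: closure_mono subU _; apply: closure_hard => // p pp pb py.
  have : T E p y by apply: HT; rewrite // mem_cat mem_primes pp b0 pb.
  case=> [pyy|Hz]; first by rewrite pyy in py.
  have px : ~~ (p %| x).
    apply/negP => px.
    have : coprime p b by apply: coprime_dvdl px _; rewrite Ex; apply: coprime_arprog.
    by rewrite prime_coprime // pb.
  by rewrite (Hz x xE px) Ex mod_dvd_add.
by move=> /(_ E (fun z h => h)).
Qed.

Lemma sqf_ext b p : 0 < b -> squarefree b -> prime p -> ~~ (p %| b) -> squarefree (b * p).
Proof.
move=> b0 sb pp pb q qp H.
have [qpE|qpN] := eqVneq q p.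
  subst q; move: H; rewrite dvdn_pmul2r ?prime_gt0 // => H; by rewrite H in pb.
have cq : coprime (q * q) p.
  by rewrite coprimeMl prime_coprime // dvdn_prime2 // qpN.
by move: H; rewrite Gauss_dvdl //; apply: sb.
Qed.

Lemma bexists (P : seq nat) x : 0 < x -> exists b, 0 < b /\ squarefree b /\ coprime x b /\
  forall p, p \in P -> prime p -> ~~ (p %| x) -> p %| b.
Proof.
move=> x0; elim: P => [|p P [b [b0 [sb [cxb Hb]]]]].
  by exists 1; split=> //; split; [exact: sqf1 | split; [exact: coprimen1|]].
case: (boolP (prime p && ~~(p %| x) && ~~(p %| b))) => [/andP[/andP[pp px] pb] | Hn].
  exists (b * p); split; first by rewrite muln_gt0 b0 prime_gt0.
  split; first exact: sqf_ext.
  split; first by rewrite coprimeMr cxb coprime_sym prime_coprime.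
  move=> q; rewrite inE => /orP [/eqP -> _ _|qP qp qx]; first exact: dvdn_mull.
  by apply: dvdn_mulr; apply: Hb.
exists b; do 3 split => //.
move=> q; rewrite inE => /orP [/eqP -> qp qx|qP qp qx]; last by apply: Hb.
by move: Hn; rewrite qp qx /=; case: (p %| b).
Qed.

Lemma P_FE E B (P : seq nat) : all (fun x => 0 < x) E -> subN B ->
  (forall y, 0 < y -> (forall p, p \in P -> prime p -> T E p y) -> B y) -> FE E B.
Proof.
move=> Epos sB HB; split=> //.
have Hex : forall x, exists b, 0 < x -> 0 < b /\ squarefree b /\ coprime x b /\
  forall p, p \in P -> prime p -> ~~ (p %| x) -> p %| b.
  move=> x; case: (posnP x) => [->|x0]; first by exists 0.
  by case: (bexists P x0) => b Hb; exists b.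
pose bf x := proj1_sig (constructive_indefinite_description _ (Hex x)).
have Hbf : forall x, 0 < x -> _ := fun x => proj2_sig (constructive_indefinite_description _ (Hex x)).
exists (fun x => arprog x (bf x)); split.
  move=> x xE; have x0 : 0 < x by move/allP: Epos => /(_ x xE).
  case: (Hbf x x0) => b0 [sb [cxb _]].
  by split; [apply: kopen_arprog | apply: arprog_self].
move=> y y0 Hc; apply: HB => // p pP pp.
case: (boolP (p %| y)) => py; first by left.
right => z zE pz; have z0 : 0 < z by move/allP: Epos => /(_ z zE).
apply: (closure_easy (Hc z zE) pp _ py).
by case: (Hbf z z0) => _ [_ [_ H]]; apply: H.
Qed.

Lemma Finf_P B : Finf B ->
  exists P : seq nat, forall y, 0 < y ->
    (forall p, p \in P -> prime p -> odd p -> p %| y) -> B y.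
Proof.
move=> [sB [n [U [n0 [HU HB]]]]].
suff [P HP] : exists P : seq nat, forall y, 0 < y ->
    (forall p, p \in P -> prime p -> odd p -> p %| y) -> forall i, i < n -> kclosure (U i) y.
  by exists P => y y0 Hy; apply: HB => //; apply: HP.
have : forall m, m <= n -> exists P : seq nat, forall y, 0 < y ->
    (forall p, p \in P -> prime p -> odd p -> p %| y) -> forall i, i < m -> kclosure (U i) y.
  elim=> [|m IH] le; first by exists [::].
  have [P1 HP1] := IH (ltnW le).
  case: (HU m le) => oU [z Uz]; case: (oU z Uz) => a [b [[a0 [b0 [cab sb]]] [_ subU]]].
  exists (primes b ++ P1) => y y0 HT i; rewrite ltnS leq_eqVlt => /orP [/eqP -> | im]; last first.
    by apply: HP1 => // p pP; apply: HT; rewrite mem_cat pP orbT.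
  apply: closure_mono subU _; apply: closure_hard => // p pp pb py.
  case: (even_prime pp) => [p2|op]; last first.
    by have := HT p ltac:(by rewrite mem_cat mem_primes pp b0 pb) pp op; rewrite (negbTE py).
  subst p; move: py; rewrite dvdn2 negbK => oy.
  have : coprime a 2 by apply: coprime_dvdr pb cab.
  by rewrite coprimen2 => oa; rewrite !modn2 oy oa.
by move=> /(_ n (leqnn n)).
Qed.

Lemma P_Finf B (P : seq nat) : subN B ->
  (forall y, 0 < y -> (forall p, p \in P -> prime p -> odd p -> p %| y) -> B y) -> Finf B.
Proof.
move=> sB HB; split=> //.
set P' := [seq p <- P | prime p && odd p].
pose q i := nth 1 P' i./2.
have Hq : forall i, q i = 1 \/ (prime (q i) /\ odd (q i)).
  move=> i; rewrite /q; case: (ltnP i./2 (size P')) => H; last by left; rewrite nth_default.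
  by right; have := mem_nth 1 H; rewrite mem_filter => /andP [/andP [-> ->] _].
exists (size P').*2.+1, (fun i => arprog (1 + odd i) (q i)); split=> //; split.
  move=> i _; split; last by exists (1 + odd i); apply: arprog_self.
  apply: kopen_arprog; split; first by case: (odd i).
  split; first by case: (Hq i) => [->|[/prime_gt0]].
  split; last by case: (Hq i) => [->|[/sqf_prime]] //; exact: sqf1.
  case: (odd i) => /=; last by rewrite coprime1n.
  by rewrite coprime2n; case: (Hq i) => [->|[]].
move=> y y0 Hc; apply: HB => // p pP pp op.
have pP' : p \in P' by rewrite mem_filter pp op.
set j := index p P'.
have jlt : j < size P' by rewrite index_mem.
have qj1 : q j.*2 = p by rewrite /q doubleK nth_index.
have qj2 : q j.*2.+1 = p by rewrite /q /= uphalf_double nth_index.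
apply/negPn/negP => py.
have h1 := closure_easy (Hc j.*2 ltac:(by rewrite ltnS leq_double ltnW)) pp ltac:(by rewrite qj1) py.
have h2 := closure_easy (Hc j.*2.+1 ltac:(by rewrite ltnS ltn_double)) pp ltac:(by rewrite qj2) py.
move: h1 h2; rewrite odd_double /= => ->.
have p3 : 2 < p by have := prime_gt1 pp; case: p pp op {pP pP' j jlt qj1 qj2 py} => [|[|[|]]].
by rewrite !modn_small //; lia.
Qed.

Lemma crt_build p y0 (Q : seq nat) : prime p -> exists y, 0 < y /\ y = y0 %[mod p] /\
  forall q, q \in Q -> prime q -> q != p -> q %| y.
Proof.
move=> pp.
have [M [M0 [cpM HM]]] : exists M, 0 < M /\ coprime p M /\
    forall q, q \in Q -> prime q -> q != p -> q %| M.
  elim: Q => [|q Q [M [M0 [cpM HM]]]]; first by exists 1; rewrite coprimen1.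
  case: (boolP (prime q && (q != p))) => [/andP [qp qnp]|Hn].
    exists (M * q); split; first by rewrite muln_gt0 M0 prime_gt0.
    split; first by rewrite coprimeMr cpM prime_coprime // dvdn_prime2 // eq_sym qnp.
    move=> r; rewrite inE => /orP [/eqP -> _ _|rQ rp rnp]; first exact: dvdn_mull.
    by apply: dvdn_mulr; apply: HM.
  exists M; do 2 split => //.
  move=> r; rewrite inE => /orP [/eqP -> rp rnp|rQ]; last exact: HM.
  by move: Hn; rewrite rp rnp.
exists (chinese p M y0 0 + p * M); split; first by rewrite addn_gt0 muln_gt0 (prime_gt0 pp) M0 orbT.
split; first by rewrite mod_dvd_add // chinese_modl.
move=> q qQ qp qnp; apply: dvdn_trans (HM q qQ qp qnp) _.
by rewrite /dvdn mulnC mod_dvd_add // chinese_modr // mod0n.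
Qed.

Definition leF E D := forall p, prime p -> forall y, T D p y -> T E p y.
Definition Z E := forall p, prime p -> odd p -> forall y, T E p y -> p %| y.
Definition posl (E : seq nat) := all (fun x => 0 < x) E.

Lemma fle_FE E D : posl E -> posl D -> (fle (FE E) (FE D) <-> leF E D).
Proof.
move=> pE pD; split=> [H p pp y0 Ty0 | H B HB].
  have FB : FE E (fun y => 0 < y /\ T E p y).
    apply: (@P_FE E _ [:: p]) => //; first by move=> y [].
    by move=> y yp Hy; split=> //; apply: Hy; rewrite ?inE.
  have [Q HQ] := FE_P (H _ FB).
  have [y [y0' [ym Hy]]] := crt_build y0 Q pp.
  have [_ Ty] : 0 < y /\ T E p y.
    apply: HQ => // q qQ qp; have [->|qnp] := eqVneq q p.
      by apply: T_mod Ty0; rewrite ym.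
    by apply: T_dvd; apply: Hy.
  exact: T_mod Ty.
have [P HP] := FE_P HB.
apply: (@P_FE D _ P) => //; first by case: HB.
by move=> y yp Hy; apply: HP => // p pP pp; apply: H => //; apply: Hy.
Qed.

Lemma feq_Finf E : posl E -> (feq (FE E) Finf <-> Z E).
Proof.
move=> pE.
have H1 : fle (FE E) Finf.
  move=> B HB; have [P HP] := FE_P HB.
  apply: (@P_Finf B P); first by case: HB.
  move=> y yp Hy; apply: HP => // p pP pp.
  by case: (even_prime pp) => [->|op]; [apply: T2 | apply: T_dvd; apply: Hy].
split=> [[_ H] p pp op y0 Ty0 | HZ]; last first.
  split=> // B HB; have [P HP] := Finf_P HB.
  apply: (@P_FE E _ P) => //; first by case: HB.
  by move=> y yp Hy; apply: HP => // p pP pp op; apply: HZ => //; apply: Hy.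
have FB : Finf (fun y => 0 < y /\ p %| y).
  apply: (@P_Finf _ [:: p]); first by move=> y [].
  by move=> y yp Hy; split=> //; apply: Hy; rewrite ?inE.
have [Q HQ] := FE_P (H _ FB).
have [y [y0' [ym Hy]]] := crt_build y0 Q pp.
have [_ py] : 0 < y /\ p %| y.
  apply: HQ => // q qQ qp; have [->|qnp] := eqVneq q p.
    by apply: T_mod Ty0; rewrite ym.
  by apply: T_dvd; apply: Hy.
by rewrite -(dvd_modeq ym).
Qed.

Definition Full E p := forall y, T E p y.
Definition Zero E p := forall y, T E p y -> p %| y.

Lemma odd_prime_gt2 p : prime p -> odd p -> 2 < p.
Proof. by move=> pp op; have := prime_gt1 pp; case: p pp op => [|[|[|]]]. Qed.

Lemma notall p k : prime p -> odd p -> ~ (forall y, p %| y \/ y = k %[mod p]).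
Proof.
move=> pp op H; have p3 := odd_prime_gt2 pp op.
have n1 : ~~ (p %| 1) by rewrite dvdn1; apply/eqP => p1; rewrite p1 in p3.
have n2 : ~~ (p %| 2) by rewrite dvdn_prime2 //; apply/eqP => p2; rewrite p2 in p3.
case: (H 1) => [h|h1]; first by rewrite h in n1.
case: (H 2) => [h|h2]; first by rewrite h in n2.
by move: h1; rewrite -h2 !modn_small //; lia.
Qed.

Lemma Full_notZero E p : prime p -> Full E p -> ~ Zero E p.
Proof.
move=> pp F Zp; have := Zp 1 (F 1); rewrite dvdn1 => /eqP p1.
by rewrite p1 in pp.
Qed.

Lemma not_Zero_ex E p : ~ Zero E p -> exists y, T E p y /\ ~~ (p %| y).
Proof.
move=> nZ; apply: NNPP => hn; apply: nZ => y Ty; apply/negPn/negP => py.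
by apply: hn; exists y.
Qed.

Lemma lemL E E' p : ~ Full E p -> ~ Zero E' p -> (forall y, T E' p y -> T E p y) ->
  forall y, T E p y -> T E' p y.
Proof.
move=> nF nZ inc y Ty.
have [y0 [Ty0 py0]] := not_Zero_ex nZ.
have [z [zE pz]] : exists z, z \in E /\ ~~ (p %| z).
  apply: NNPP => hn; apply: nF => y'; right => z zE pz; exfalso; apply: hn; exists z.
  by split.
case: (inc y0 Ty0) => [h|Hy0]; first by rewrite h in py0.
case: Ty => [h|Hy]; first by left.
apply: T_mod Ty0; by rewrite (Hy0 z zE pz) (Hy z zE pz).
Qed.

Definition R3 k m := [:: k; k + m; k + m + m].

Lemma R3_pos k m : 0 < k -> posl (R3 k m).
Proof. by move=> k0; rewrite /posl /= !addn_gt0 k0. Qed.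

Lemma noteq r u m : ~~ (r %| m) -> u = u + m %[mod r] -> False.
Proof.
move=> rm /eqP; rewrite -{1}(addn0 u) eqn_modDl mod0n => /eqP H.
by move: rm; rewrite /dvdn -H.
Qed.

Lemma R3_zero k m r : prime r -> odd r -> ~~ (r %| m) -> Zero (R3 k m) r.
Proof.
move=> rp ro rm y [//|H].
apply/negPn/negP => _.
have r2m : ~~ (r %| m + m).
  by rewrite addnn -mul2n Gauss_dvdr // coprime_sym coprime2n.
have mem1 : k \in R3 k m by rewrite inE eqxx.
have mem2 : k + m \in R3 k m by rewrite !inE eqxx orbT.
have mem3 : k + m + m \in R3 k m by rewrite !inE eqxx !orbT.
case: (boolP (r %| k)) => rk.
  have r1 : ~~ (r %| k + m) by rewrite dvdn_addr.
  have r2 : ~~ (r %| k + m + m) by rewrite -addnA dvdn_addr.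
  apply: (noteq rm (u := k + m)); by rewrite -(H _ mem2 r1) (H _ mem3 r2).
case: (boolP (r %| k + m)) => rkm.
  have r2 : ~~ (r %| k + m + m) by rewrite dvdn_addr.
  apply: (noteq r2m (u := k)); by rewrite addnA -(H _ mem1 rk) (H _ mem3 r2).
apply: (noteq rm (u := k)); by rewrite -(H _ mem1 rk) (H _ mem2 rkm).
Qed.

Lemma R3_pair k m r : prime r -> r %| m -> ~~ (r %| k) ->
  forall y, T (R3 k m) r y <-> (r %| y \/ y = k %[mod r]).
Proof.
move=> rp rm rk y; split.
  by case=> [h|H]; [left | right; apply: H rk; rewrite inE eqxx].
case=> [h|yk]; first by left.
right => z; rewrite !inE => /orP [/eqP ->|/orP [/eqP ->|/eqP ->]] _ //.
  by rewrite -(muln1 m) mod_dvd_add.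
by rewrite -addnA addnn -mul2n mulnC mod_dvd_add.
Qed.




Lemma fle_trans F G H : fle F G -> fle G H -> fle F H.
Proof. by move=> a b B /a /b. Qed.

Lemma feq_sym F G : feq F G -> feq G F.
Proof. by case. Qed.

Lemma feq_trans F G H : feq F G -> feq G H -> feq F H.
Proof. by move=> [a b] [c d]; split; [apply: fle_trans a c | apply: fle_trans d b]. Qed.

Lemma flt_feq G G' H H' : feq G G' -> feq H H' -> flt G H -> flt G' H'.
Proof.
move=> [g1 g2] [h1 h2] [le nle]; split.
  by apply: fle_trans g2 _; apply: fle_trans le h1.
by move=> le'; apply: nle; apply: fle_trans h1 _; apply: fle_trans le' g2.
Qed.

Lemma inFrak_case H : inFrak H -> ~ feq H Finf ->
  exists E', posl E' /\ feq H (FE E') /\ ~ Z E'.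
Proof.
case=> [[E' [pE' fe]] nf|//].
exists E'; do 2 split=> //; move=> /(feq_Finf pE') fe'.
by apply: nf; apply: feq_trans fe fe'.
Qed.

Lemma Frak1_feq G G' : feq G G' -> Frak1 G -> Frak1 G'.
Proof.
move=> fe [iG [nG HG]]; split.
  case: iG => [[E [pE fE]]|fI]; [left; exists E; split=> // | right].
    by apply: feq_trans (feq_sym fe) fE.
  by apply: feq_trans (feq_sym fe) fI.
split; first by move=> f; apply: nG; apply: feq_trans fe f.
move=> H iH nH lt; apply: (HG H iH nH).
by apply: flt_feq lt; [apply: feq_sym | split].
Qed.

Lemma Zero_trans E E' r : leF E E' -> prime r -> Zero E r -> Zero E' r.
Proof. by move=> le rp Zr y Ty; apply: Zr; apply: le. Qed.

Lemma Full_trans E E' r : leF E E' -> prime r -> Full E' r -> Full E r.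
Proof. by move=> le rp F y; apply: le. Qed.

Definition F1 E := exists p, prime p /\ odd p /\ ~ Full E p /\ ~ Zero E p /\
  forall q, prime q -> odd q -> q <> p -> Zero E q.

Lemma feq_refl F : feq F F.
Proof. by split. Qed.

Lemma lt_FE E H E' : posl E -> posl E' -> feq H (FE E') -> flt (FE E) H ->
  leF E E' /\ ~ leF E' E.
Proof.
move=> pE pE' fe [le nle]; split.
  by apply/(fle_FE pE pE'); apply: fle_trans le _; case: fe.
by move=> /(fle_FE pE' pE) l; apply: nle; apply: fle_trans l; case: fe.
Qed.

Lemma nZ_ex E : ~ Z E -> exists p, prime p /\ odd p /\ ~ Zero E p.
Proof.
move=> nZ; apply: NNPP => hn; apply: nZ => p pp op; apply: NNPP => nz.
by apply: hn; exists p.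
Qed.


Lemma ne_of (a b : nat) : a != b -> a <> b.
Proof. by move/eqP. Qed.

Lemma Frak1_FE E : posl E -> (Frak1 (FE E) <-> F1 E).
Proof.
move=> pE; split; last first.
  move=> [p [pp [op [nF [nZ HZ]]]]]; split; first by left; exists E; split; [exact: pE | exact: feq_refl].
  split; first by move=> /(feq_Finf pE) ZE; exact: (nZ (ZE p pp op)).
  move=> H iH nH lt; have [E' [pE' [fe nZ']]] := inFrak_case iH nH.
  have [le nle] := lt_FE pE pE' fe lt; apply: nle.
  have nZ'p : ~ Zero E' p.
    move=> Zp; apply: nZ' => r rp ro; have [->//|rnp] := eqVneq r p.
    exact: (Zero_trans le rp (HZ r rp ro (ne_of rnp))).
  move=> q qp y Ty; case: (even_prime qp) => [->|oq]; first exact: T2.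
  have [qE|qnp] := eqVneq q p; first by subst q; apply: lemL nF nZ'p (le p pp) y Ty.
  by apply: T_dvd; exact: (HZ q qp oq (ne_of qnp) y Ty).
move=> [_ [nf HF]].
have nZ : ~ Z E by move=> ZE; apply: nf; apply/(feq_Finf pE).
have [p [pp [op nZp]]] := nZ_ex nZ.
have [y0 [Ty0 py0]] := not_Zero_ex nZp.
have y00 : 0 < y0 by case: y0 py0 {Ty0} => //; rewrite dvdn0.
set E' := R3 y0 p.
have pE' : posl E' by apply: R3_pos.
have Hp := R3_pair pp (dvdnn p) py0.
have nZ' : ~ Z E'.
  by move=> Z'; have := Z' p pp op y0 (proj2 (Hp y0) (or_intror erefl)); rewrite (negbTE py0).
have le : leF E E'.
  move=> q qp y Ty; case: (even_prime qp) => [->|oq]; first exact: T2.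
  have [qE|qnp] := eqVneq q p.
    subst q; case: (proj1 (Hp y) Ty) => [h|h]; first by left.
    by apply: T_mod Ty0.
  have qnd : ~~ (q %| p) by rewrite dvdn_prime2 // qnp.
  by apply: T_dvd; exact: (R3_zero qp oq qnd Ty).
have le' : leF E' E.
  apply/(fle_FE pE' pE); apply: NNPP => nl.
  apply: (HF (FE E') (or_introl (ex_intro _ E' (conj pE' (feq_refl _))))).
    by move=> /(feq_Finf pE').
  by split=> //; apply/(fle_FE pE pE').
exists p; do 2 split=> //; split.
  move=> F; apply: (notall (k := y0) pp op) => y.
  by apply/(Hp y); apply: le'.
split=> // q qp oq qnp y Ty.
have qnd : ~~ (q %| p) by rewrite dvdn_prime2 //; apply/eqP.
exact: (R3_zero qp oq qnd (le' q qp y Ty)).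
Qed.

Definition F2 E :=
  (exists p, prime p /\ odd p /\ Full E p /\ forall q, prime q -> odd q -> q <> p -> Zero E q) \/
  (exists p q, prime p /\ prime q /\ odd p /\ odd q /\ p <> q /\
     ~ Full E p /\ ~ Zero E p /\ ~ Full E q /\ ~ Zero E q /\
     forall r, prime r -> odd r -> r <> p -> r <> q -> Zero E r).

Lemma nFrak1 H E' : feq H (FE E') -> posl E' -> ~ Frak1 H -> ~ F1 E'.
Proof.
move=> fe pE' n1 F; apply: n1; apply: (Frak1_feq (feq_sym fe)).
by apply/(Frak1_FE pE').
Qed.

Lemma F2_Frak2 E : posl E -> F2 E -> Frak2 (FE E).
Proof.
move=> pE HF2; split; first by left; exists E; split; [exact: pE | exact: feq_refl].
split.
  move=> /(feq_Finf pE) ZE; case: HF2 => [[p [pp [op [F _]]]]|[p [q [pp [_ [op [_ [_ [_ [nZ _]]]]]]]]]].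
    by apply: (Full_notZero pp F); apply: ZE.
  by exact: (nZ (ZE p pp op)).
split.
  move=> /(Frak1_FE pE) [p' [pp' [op' [nF' [nZ' HZ']]]]].
  case: HF2 => [[p [pp [op [F HZ]]]]|[p [q [pp [qp [op [oq [pq [nFp [nZp [nFq [nZq _]]]]]]]]]]]].
    have [e|ne] := eqVneq p' p; first by subst p'; apply: nF'.
    by apply: (Full_notZero pp F); apply: (HZ' p pp op); move=> e; rewrite e eqxx in ne.
  have [e|ne] := eqVneq p' p.
    by subst p'; apply: nZq; apply: (HZ' q qp oq); move=> e; apply: pq; rewrite e.
  by apply: nZp; apply: (HZ' p pp op); move=> e; rewrite e eqxx in ne.
move=> H iH nH n1H lt; have [E' [pE' [fe nZ']]] := inFrak_case iH nH.
have nF1 := nFrak1 fe pE' n1H.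
have [le nle] := lt_FE pE pE' fe lt; apply: nle.
case: HF2 => [[p [pp [op [F HZ]]]]|[p [q [pp [qp [op [oq [pq [nFp [nZp [nFq [nZq HZ]]]]]]]]]]]].
  have nZ'p : ~ Zero E' p.
    move=> Zp; apply: nZ' => r rp ro; have [->//|rnp] := eqVneq r p.
    exact: (Zero_trans le rp (HZ r rp ro (ne_of rnp))).
  have F' : Full E' p.
    apply: NNPP => nF; apply: nF1; exists p; do 4 split => //.
    by move=> r rp ro rnp; exact: (Zero_trans le rp (HZ r rp ro rnp)).
  move=> r rp y Ty; case: (even_prime rp) => [->|ro]; first exact: T2.
  have [->|rnp] := eqVneq r p; first exact: F'.
  by apply: T_dvd; exact: (HZ r rp ro (ne_of rnp) y Ty).
have HZ' : forall r, prime r -> odd r -> r <> p -> r <> q -> Zero E' r.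
  by move=> r rp ro rnp rnq; exact: (Zero_trans le rp (HZ r rp ro rnp rnq)).
case: (classic (Zero E' p)) => Zp; case: (classic (Zero E' q)) => Zq.
- exfalso; apply: nZ' => r rp ro.
  have [->//|rnp] := eqVneq r p; have [->//|rnq] := eqVneq r q.
  exact: (HZ' r rp ro (ne_of rnp) (ne_of rnq)).
- exfalso; apply: nF1; exists q; do 2 split => //; split.
    by move=> F'; apply: nFq; apply: Full_trans le qp F'.
  split=> // r rp ro rnq; have [->//|rnp] := eqVneq r p.
  exact: (HZ' r rp ro (ne_of rnp) rnq).
- exfalso; apply: nF1; exists p; do 2 split => //; split.
    by move=> F'; apply: nFp; apply: Full_trans le pp F'.
  split=> // r rp ro rnp; have [->//|rnq] := eqVneq r q.
  exact: (HZ' r rp ro rnp (ne_of rnq)).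
move=> r rp y Ty; case: (even_prime rp) => [->|ro]; first exact: T2.
have [e|rnp] := eqVneq r p; first by subst r; exact: lemL nFp Zp (le p pp) y Ty.
have [e|rnq] := eqVneq r q; first by subst r; exact: lemL nFq Zq (le q qp) y Ty.
by apply: T_dvd; exact: (HZ r rp ro (ne_of rnp) (ne_of rnq) y Ty).
Qed.

Lemma Frak2_F2 E : posl E -> Frak2 (FE E) -> F2 E.
Proof.
move=> pE [_ [nf [n1 Hmax]]].
have nZ : ~ Z E by move=> ZE; apply: nf; apply/(feq_Finf pE).
have nF1 : ~ F1 E by move=> F; apply: n1; apply/(Frak1_FE pE).
have [p [pp [op nZp]]] := nZ_ex nZ.
have [y0 [Ty0 py0]] := not_Zero_ex nZp.
case: (classic (exists q, prime q /\ odd q /\ q <> p /\ ~ Zero E q)) => [[q [qp [oq [qnp nZq]]]]|hn]; last first.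
  have HZ : forall q, prime q -> odd q -> q <> p -> Zero E q.
    move=> q qp oq qnp; apply: NNPP => nz; apply: hn; exists q; split=> //; split=> //.
  left; exists p; split=> //; split=> //; split=> //.
  apply: NNPP => nF; apply: nF1; exists p; split=> //; split=> //; split=> //.
have [y1 [Ty1 py1]] := not_Zero_ex nZq.
have cpq : coprime p q.
  by rewrite prime_coprime // dvdn_prime2 //; apply/eqP => e; apply: qnp.
set k := chinese p q y0 y1 + p * q.
have kp : k = y0 %[mod p] by rewrite /k mod_dvd_add // chinese_modl.
have kq : k = y1 %[mod q] by rewrite /k mulnC mod_dvd_add // chinese_modr.
have k0 : 0 < k by rewrite /k addn_gt0 muln_gt0 (prime_gt0 pp) (prime_gt0 qp) orbT.
have pk : ~~ (p %| k) by rewrite (dvd_modeq kp).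
have qk : ~~ (q %| k) by rewrite (dvd_modeq kq).
set E' := R3 k (p * q).
have pE' : posl E' by apply: R3_pos.
have Hp := R3_pair pp (dvdn_mulr q (dvdnn p)) pk.
have Hq := R3_pair qp (dvdn_mull p (dvdnn q)) qk.
have Hr : forall r, prime r -> odd r -> r <> p -> r <> q -> Zero E' r.
  move=> r rp ro rnp rnq; have rnd : ~~ (r %| p * q).
    rewrite Euclid_dvdM // !dvdn_prime2 //; apply/norP; split; apply/eqP => //.
  exact: (R3_zero rp ro rnd).
have nZ'p : ~ Zero E' p.
  by move=> Zp; have := Zp k (proj2 (Hp k) (or_intror erefl)); rewrite (negbTE pk).
have nZ'q : ~ Zero E' q.
  by move=> Zq; have := Zq k (proj2 (Hq k) (or_intror erefl)); rewrite (negbTE qk).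
have nZ' : ~ Z E' by move=> Z'; apply: nZ'p; exact: (Z' p pp op).
have nF1' : ~ F1 E'.
  move=> [r [rp [ro [_ [nZr HZr]]]]]; have [e|rnp] := eqVneq r p.
    by subst r; apply: nZ'q; apply: HZr.
  by apply: nZ'p; apply: HZr => // e; rewrite e eqxx in rnp.
have le : leF E E'.
  move=> r rp y Ty; case: (even_prime rp) => [->|ro]; first exact: T2.
  have [e|rnp] := eqVneq r p.
    subst r; case: (proj1 (Hp y) Ty) => [h|h]; first by left.
    by apply: T_mod Ty0; rewrite h kp.
  have [e|rnq] := eqVneq r q.
    subst r; case: (proj1 (Hq y) Ty) => [h|h]; first by left.
    by apply: T_mod Ty1; rewrite h kq.
  by apply: T_dvd; exact: (Hr r rp ro (ne_of rnp) (ne_of rnq) y Ty).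
have le' : leF E' E.
  apply/(fle_FE pE' pE); apply: NNPP => nl.
  apply: (Hmax (FE E') (or_introl (ex_intro _ E' (conj pE' (feq_refl _))))).
  - by move=> /(feq_Finf pE').
  - by move=> /(Frak1_FE pE').
  - by split=> //; apply/(fle_FE pE pE').
right; exists p, q; do 4 (split => //).
split; first by move=> e; apply: qnp.
split.
  move=> F; apply: (notall (k := k) pp op) => y.
  by apply/(Hp y); apply: le'.
split=> //; split.
  move=> F; apply: (notall (k := k) qp oq) => y.
  by apply/(Hq y); apply: le'.
split=> // r rp ro rnp rnq y Ty.
exact: (Hr r rp ro rnp rnq y (le' r rp y Ty)).
Qed.

Lemma Pi_Full E p : prime p -> odd p -> (PiE E p <-> Full E p).
Proof.
move=> pp op; split.
  by move=> [_ H] y; right => z zE pz; rewrite H in pz.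
move=> F; split=> // z zE; apply/negPn/negP => pz.
apply: (notall (k := z) pp op) => y.
by case: (F y) => [h|H]; [left | right; apply: H].
Qed.

Lemma AE_Zero E p : prime p -> (AE E p <-> ~ Zero E p).
Proof.
move=> pp; split.
  move=> [_ [k [k0 Hk]]] Zp.
  case: (classic (exists z, z \in E /\ ~~ (p %| z))) => [[z [zE pz]]|hn].
    have Tk : T E p k.
      right => z' z'E pz'; case: (Hk z' z'E) => [h|h]; first by rewrite h in pz'.
      by rewrite h.
    have pk := Zp k Tk.
    case: (Hk z zE) => [h|h]; first by rewrite h in pz.
    by rewrite (dvd_modeq h) pk in pz.
  have T1 : T E p 1 by right => z zE pz; exfalso; apply: hn; exists z.
  have := Zp 1 T1; rewrite dvdn1 => /eqP p1; by rewrite p1 in pp.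
move=> nZ; have [y [Ty py]] := not_Zero_ex nZ.
split=> //; exists y; split; first by case: y py {Ty} => //; rewrite dvdn0.
move=> z zE; case: (boolP (p %| z)) => pz; [by left | right].
case: Ty => [h|H]; first by rewrite h in py.
by rewrite (H z zE pz).
Qed.

Lemma AE2 E : AE E 2.
Proof.
split=> //; exists 1; split=> // z _; case oz: (odd z).
  by right; rewrite modn2 oz.
by left; rewrite dvdn2 oz.
Qed.

Lemma AE_prime E r : AE E r -> prime r.
Proof. by case. Qed.

Lemma PiE_prime E r : PiE E r -> prime r.
Proof. by case. Qed.

Theorem lemma3p12 (E : seq nat) :
  E <> [::] -> all (fun x => 0 < x) E ->
  (Frak2 (FE E) <->
   (exists p, prime p /\ odd p /\ PiE E p /\
      (forall r, AE E r <-> (r = 2 \/ r = p))) \/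
   (exists p q, prime p /\ prime q /\ odd p /\ odd q /\ p <> q /\
      (forall r, AE E r <-> (r = 2 \/ r = p \/ r = q)) /\
      (forall r, PiE E r -> r = 2))).
Proof.
move=> _ pE.
have eqv : Frak2 (FE E) <-> F2 E by split; [apply: Frak2_F2 | apply: F2_Frak2].
apply: (iff_trans eqv); split.
  case=> [[p [pp [op [F HZ]]]] | [p [q [pp [qp [op [oq [pq [nFp [nZp [nFq [nZq HZ]]]]]]]]]]]].
    left; exists p; split=> //; split=> //; split; first by apply/(Pi_Full E pp op).
    move=> r; split.
      move=> Ar; have rp := AE_prime Ar.
      case: (even_prime rp) => [->|ro]; first by left.
      have [e|rnp] := eqVneq r p; first by right.
      by exfalso; apply: (proj1 (AE_Zero E rp) Ar); exact: (HZ r rp ro (ne_of rnp)).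
    case=> ->; first exact: AE2.
    by apply/(AE_Zero E pp); exact: (Full_notZero pp F).
  right; exists p, q; do 5 (split=> //); split.
    move=> r; split.
      move=> Ar; have rp := AE_prime Ar.
      case: (even_prime rp) => [->|ro]; first by left.
      have [e|rnp] := eqVneq r p; first by right; left.
      have [e|rnq] := eqVneq r q; first by right; right.
      by exfalso; apply: (proj1 (AE_Zero E rp) Ar); exact: (HZ r rp ro (ne_of rnp) (ne_of rnq)).
    case=> [->|[->|->]]; first exact: AE2.
      by apply/(AE_Zero E pp).
    by apply/(AE_Zero E qp).
  move=> r Pr; have rp := PiE_prime Pr.
  case: (even_prime rp) => [//|ro].
  have F := proj1 (Pi_Full E rp ro) Pr.
  have [e|rnp] := eqVneq r p; first by subst r; exfalso; apply: nFp.
  have [e|rnq] := eqVneq r q; first by subst r; exfalso; apply: nFq.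
  by exfalso; apply: (Full_notZero rp F); exact: (HZ r rp ro (ne_of rnp) (ne_of rnq)).
case=> [[p [pp [op [Pp HA]]]] | [p [q [pp [qp [op [oq [pq [HA HP]]]]]]]]].
  left; exists p; split=> //; split=> //; split; first by apply/(Pi_Full E pp op).
  move=> r rp ro rnp; apply: NNPP => nz.
  case: (proj1 (HA r) (proj2 (AE_Zero E rp) nz)) => e; last exact: rnp.
  by subst r.
right; exists p, q; do 5 (split=> //).
have np2 : forall s, odd s -> s <> 2 by move=> s os e; subst s.
split; first by move=> F; apply: (np2 p op); apply: HP; apply/(Pi_Full E pp op).
split; first by apply/(AE_Zero E pp); apply/HA; right; left.
split; first by move=> F; apply: (np2 q oq); apply: HP; apply/(Pi_Full E qp oq).
split; first by apply/(AE_Zero E qp); apply/HA; right; right.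
move=> r rp ro rnp rnq; apply: NNPP => nz.
case: (proj1 (HA r) (proj2 (AE_Zero E rp) nz)) => [e|[e|e]] //.
by subst r.
Qed.
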